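(* Let $\alpha>0$, $T:=T(\alpha)$, and let $\varphi_1,\dots,\varphi_T$ be positive reals with $\frac{T+1}{T}\le\varphi_k\le\frac{T}{T-1}$ for all $k$ (the upper bound being void when $T=1$) and $\prod_{j=1}^T\varphi_j=T/\alpha$; extend periodically by $\varphi_{T+j}:=\varphi_j$ for all $j\ge1$. Set $\psi_i:=\prod_{j=1}^i\varphi_j$ (with $\psi_0=1$) and $$a_t:=\max\Big\{\tfrac{T-i+t-1}{\alpha}\psi_i:\ 0\le i<T\Big\},\qquad t\ge1.$$ Let $(\chi_t)_{t\ge1}$ be defined by $\chi_t:=\max\{a_t,\frac{t-1}{\alpha}\chi_1,\dots,\frac1\alpha\chi_{t-1}\}$. Then $\chi_t=\psi_{t+T-1}=\prod_{j=1}^{t+T-1}\varphi_j$ for all $t\ge1$.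
   Context: For $\alpha>0$, let $T=T(\alpha)\in\mathbb N$ be the unique positive integer with $\frac{(T-1)^T}{T^{T-1}}<\alpha\le\frac{T^{T+1}}{(T+1)^T}$, and define $\nu(\alpha):=\frac1T\log\frac T\alpha$. *)

(* Defs.v *)
From Stdlib Require Import Reals List.
Import ListNotations.
Open Scope R_scope.

Fixpoint psi (phi : nat -> R) (i : nat) : R :=
  match i with
  | O => 1
  | S k => psi phi k * phi (S k)
  end.

Definition a_seq (alpha : R) (T : nat) (phi : nat -> R) (t : nat) : R :=
  let f := fun i : nat => (INR T - INR i + INR t - 1) / alpha * psi phi i in
  fold_right Rmax (f O) (map f (seq 0 T)).

Definition chi_rec (alpha : R) (a chi : nat -> R) : Prop :=
  forall t : nat, (1 <= t)%nat ->
    chi t = fold_right Rmax (a t)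
              (map (fun s : nat => (INR t - INR s) / alpha * chi s) (seq 1 (t - 1))).

(* Main.v *)
Require Import Defs.
From Stdlib Require Import Reals List Lra Lia Psatz Arith.
Open Scope R_scope.

Lemma fold_Rmax_le (x0 M : R) (l : list R) :
  x0 <= M -> (forall y, In y l -> y <= M) -> fold_right Rmax x0 l <= M.
Proof.
  induction l as [|a l IH]; simpl; intros H1 H2; auto.
  apply Rmax_lub; auto.
Qed.

Lemma fold_Rmax_ge_x0 (x0 : R) (l : list R) : x0 <= fold_right Rmax x0 l.
Proof.
  induction l as [|a l IH]; simpl; [lra|].
  eapply Rle_trans; [exact IH| apply Rmax_r].
Qed.

Lemma fold_Rmax_ge_in (x0 y : R) (l : list R) : In y l -> y <= fold_right Rmax x0 l.
Proof.
  induction l as [|a l IH]; simpl; [tauto|].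
  intros [<-|H]; [apply Rmax_l|].
  eapply Rle_trans; [exact (IH H)| apply Rmax_r].
Qed.

Theorem proposition2 (alpha : R) (T : nat) (phi chi : nat -> R) :
  0 < alpha ->
  (1 <= T)%nat ->
  (INR T - 1) ^ T / INR T ^ (T - 1) < alpha ->
  alpha <= INR T ^ (T + 1) / (INR T + 1) ^ T ->
  (forall k : nat, (1 <= k <= T)%nat ->
     0 < phi k /\ (INR T + 1) / INR T <= phi k /\
     ((1 < T)%nat -> phi k <= INR T / (INR T - 1))) ->
  psi phi T = INR T / alpha ->
  (forall j : nat, (1 <= j)%nat -> phi (T + j)%nat = phi j) ->
  chi_rec alpha (a_seq alpha T phi) chi ->
  forall t : nat, (1 <= t)%nat -> chi t = psi phi (t + T - 1).
Proof.
  intros Ha HT _ _ Hb HpsiT Hper Hchi.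
  assert (HTr : 1 <= INR T) by (apply (le_INR 1); lia).
  assert (Hphi : forall k, (1 <= k)%nat -> 0 < phi k /\ (INR T + 1) / INR T <= phi k /\
     ((1 < T)%nat -> phi k <= INR T / (INR T - 1))).
  { intro k; induction k as [k IH] using (well_founded_induction lt_wf); intro Hk.
    destruct (le_lt_dec k T).
    - apply Hb; lia.
    - replace k with (T + (k - T))%nat by lia. rewrite Hper by lia. apply IH; lia. }
  assert (Hlo : forall k, (1 <= k)%nat -> INR T + 1 <= INR T * phi k).
  { intros k Hk. destruct (Hphi k Hk) as [_ [H _]].
    apply Rmult_le_compat_l with (r := INR T) in H; [|lra].
    replace (INR T * ((INR T + 1) / INR T)) with (INR T + 1) in H by (field; lra). lra. }
  assert (Hpos : forall m, 0 < psi phi m).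
  { induction m; simpl; [lra|]. apply Rmult_lt_0_compat; auto. apply Hphi; lia. }
  assert (HP : forall m, psi phi (T + m) = psi phi m * (INR T / alpha)).
  { induction m.
    - rewrite Nat.add_0_r, HpsiT. simpl. ring.
    - rewrite Nat.add_succ_r.
      change (psi phi (S (T + m))) with (psi phi (T + m) * phi (S (T + m))).
      change (psi phi (S m)) with (psi phi m * phi (S m)).
      replace (S (T + m)) with (T + S m)%nat by lia.
      rewrite Hper by lia. rewrite IHm. ring. }
  assert (Hlow : forall m r, psi phi m * (INR T + INR r) <= INR T * psi phi (m + r)).
  { intros m r. induction r.
    - rewrite Nat.add_0_r. simpl. lra.
    - rewrite Nat.add_succ_r.
      change (psi phi (S (m + r))) with (psi phi (m + r) * phi (S (m + r))).
      rewrite S_INR.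
      assert (H1 := Hlo (S (m + r)) ltac:(lia)).
      assert (H2 := Hpos (m + r)%nat). assert (H3 := Hpos m).
      assert (H4 : 0 <= INR r) by apply pos_INR.
      apply Rmult_le_reg_l with (INR T); [lra|].
      apply Rle_trans with (psi phi m * (INR T + INR r) * (INR T + 1)); [nra|].
      apply Rle_trans with (INR T * psi phi (m + r) * (INR T + 1)).
      { apply Rmult_le_compat_r; lra. }
      replace (INR T * (INR T * (psi phi (m + r) * phi (S (m + r))))) with
        ((INR T * psi phi (m + r)) * (INR T * phi (S (m + r)))) by ring.
      apply Rmult_le_compat_l; [nra|lra]. }
  assert (Hup : forall m k, (k <= T)%nat -> INR (T - k) * psi phi m <= alpha * psi phi (m + (T - k))).
  { intros m k. induction k; intro Hk.
    - rewrite Nat.sub_0_r, Nat.add_comm, HP. right. field. lra.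
    - destruct (Nat.eq_dec (T - S k) 0) as [E|E].
      + rewrite E. simpl. assert (H := Hpos (m + 0)%nat). nra.
      + assert (IH := IHk ltac:(lia)).
        replace (m + (T - k))%nat with (S (m + (T - S k))) in IH by lia.
        change (psi phi (S (m + (T - S k)))) with
          (psi phi (m + (T - S k)) * phi (S (m + (T - S k)))) in IH.
        destruct (Hphi (S (m + (T - S k))) ltac:(lia)) as [Hp0 [_ Hu]].
        assert (Hu' := Hu ltac:(lia)).
        assert (HT2 : 2 <= INR T) by (apply (le_INR 2); lia).
        set (ph := phi (S (m + (T - S k)))) in *.
        assert (Hu2 : (INR T - 1) * ph <= INR T).
        { apply Rmult_le_compat_l with (r := INR T - 1) in Hu'; [|lra].
          replace ((INR T - 1) * (INR T / (INR T - 1))) with (INR T) in Hu' by (field; lra). lra. }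
        replace (T - k)%nat with (S (T - S k)) in IH by lia.
        rewrite S_INR in IH.
        set (D := INR (T - S k)) in *.
        assert (HD : D + 1 <= INR T).
        { unfold D. rewrite <- S_INR. apply le_INR. lia. }
        set (X := alpha * psi phi (m + (T - S k))).
        assert (HX : 0 < X) by (unfold X; apply Rmult_lt_0_compat; auto).
        assert (Hm := Hpos m).
        assert (HD0 : 0 <= D) by apply pos_INR.
        replace (alpha * (psi phi (m + (T - S k)) * ph)) with (X * ph) in IH by (unfold X; ring).
        apply Rmult_le_reg_l with (INR T); [lra|].
        apply Rle_trans with ((INR T - 1) * ((D + 1) * psi phi m)); [nra|].
        apply Rle_trans with ((INR T - 1) * (X * ph)); [nra|].
        fold X. nra. }
  assert (Hmain : forall m d, (1 <= d)%nat -> INR d * psi phi m <= alpha * psi phi (m + d)).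
  { intros m d Hd. destruct (le_lt_dec d T).
    - assert (H := Hup m (T - d)%nat ltac:(lia)).
      replace (T - (T - d))%nat with d in H by lia. exact H.
    - replace (m + d)%nat with (T + (m + (d - T)))%nat by lia. rewrite HP.
      assert (H := Hlow m (d - T)%nat).
      rewrite minus_INR in H by lia.
      replace (alpha * (psi phi (m + (d - T)) * (INR T / alpha))) with
        (INR T * psi phi (m + (d - T))) by (field; lra).
      lra. }
  assert (Hdiv : forall c x y, c * x <= alpha * y -> c / alpha * x <= y).
  { intros c x y H. apply Rmult_le_reg_l with alpha; auto.
    replace (alpha * (c / alpha * x)) with (c * x) by (field; lra). exact H. }
  intro t; induction t as [t IH] using (well_founded_induction lt_wf); intro Ht.
  rewrite (Hchi t Ht). apply Rle_antisym.
  - apply fold_Rmax_le.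
    + unfold a_seq; cbv zeta. apply fold_Rmax_le.
      * apply Hdiv. replace (INR T - INR 0 + INR t - 1) with (INR (t + T - 1 - 0)).
        -- replace (t + T - 1)%nat with (0 + (t + T - 1 - 0))%nat at 2 by lia.
           apply Hmain; lia.
        -- rewrite minus_INR by lia. rewrite minus_INR by lia. rewrite plus_INR. simpl. ring.
      * intros y Hy. apply in_map_iff in Hy. destruct Hy as [i [<- Hi]].
        apply in_seq in Hi.
        apply Hdiv. replace (INR T - INR i + INR t - 1) with (INR (t + T - 1 - i)).
        -- replace (t + T - 1)%nat with (i + (t + T - 1 - i))%nat at 2 by lia.
           apply Hmain; lia.
        -- rewrite minus_INR by lia. rewrite minus_INR by lia. rewrite plus_INR. simpl. ring.
    + intros y Hy. apply in_map_iff in Hy. destruct Hy as [s [<- Hs]].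
      apply in_seq in Hs.
      rewrite (IH s ltac:(lia) ltac:(lia)).
      apply Hdiv. rewrite <- minus_INR by lia.
      replace (t + T - 1)%nat with ((s + T - 1) + (t - s))%nat by lia.
      apply Hmain; lia.
  - destruct (le_lt_dec t T).
    + apply Rle_trans with ((INR T - INR (t - 1) + INR t - 1) / alpha * psi phi (t - 1)).
      * replace (t + T - 1)%nat with (T + (t - 1))%nat by lia. rewrite HP.
        rewrite minus_INR by lia. right. simpl. field. lra.
      * eapply Rle_trans; [|apply fold_Rmax_ge_x0].
        unfold a_seq; cbv zeta. apply fold_Rmax_ge_in. apply in_map_iff.
        exists (t - 1)%nat. split; [reflexivity|]. apply in_seq; lia.
    + apply Rle_trans with ((INR t - INR (t - T)) / alpha * chi (t - T)%nat).
      * rewrite (IH (t - T)%nat ltac:(lia) ltac:(lia)).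
        replace (t - T + T - 1)%nat with (t - 1)%nat by lia.
        replace (t + T - 1)%nat with (T + (t - 1))%nat by lia. rewrite HP.
        rewrite minus_INR by lia. right. field. lra.
      * apply fold_Rmax_ge_in. apply in_map_iff.
        exists (t - T)%nat. split; [reflexivity|]. apply in_seq; lia.
Qed.
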